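(* Let $\alpha\in\alpha_0\mathbb{Z}$ with $\frac{1}{\sqrt2}\le|\alpha|\le1$, $d=\alpha^2/2$, and fix $s\in\mathbb{Z}$. Then the vectors $(Y_{\alpha,-n-d}\otimes Y_{\alpha,-n-d-s})(\Omega_0\otimes\Omega_0)$, $n\in\mathbb{Z}$, are mutually orthogonal and the series $\sum_{n\in\mathbb{Z}}(Y_{\alpha,-n-d}\otimes Y_{\alpha,-n-d-s})(\Omega_0\otimes\Omega_0)$ does not converge in $\hat{\mathcal H}\otimes\hat{\mathcal H}$ (the sum of the squared norms of its terms is infinite). Consequently no operator of the form $\sum_n Y_{\alpha,-n-d}\otimes Y_{\alpha,-n-d-s}$ can be defined by this series on a domain containing $\Omega_0\otimes\Omega_0$.
   Context: For $\beta\in\mathbb{R}$ let $\mathcal H_\beta$ be the Hilbert space carrying a unitary representation of the Heisenberg algebra: operators $J_{\beta,n}$, $n\in\mathbb{Z}$, with $[J_{\beta,m},J_{\beta,n}]=m\,\delta_{m+n,0}$, $J_{\beta,n}^*=J_{\beta,-n}$, $J_{\beta,0}=\beta\cdot\mathbf 1$, and a cyclic unit vector $\Omega_\beta$ with $J_{\beta,n}\Omega_\beta=0$ for $n>0$; $\mathcal H_\beta$ is the closure of the span $\mathcal H_\beta^{\rm fin}$ of the vectors $J_{\beta,-n_1}\cdots J_{\beta,-n_k}\Omega_\beta$, $n_i>0$. Fix $\alpha_0\in\mathbb{R}$ with $0<|\alpha_0|\le1$ and set $\hat{\mathcal H}=\bigoplus_{j\in\mathbb{Z}}\mathcal H_{j\alpha_0}$,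 $\hat J_n=\bigoplus_j J_{j\alpha_0,n}$. For $\alpha\in\alpha_0\mathbb{Z}$ let $c_\alpha$ be the unitary on $\hat{\mathcal H}$ mapping $\mathcal H_\beta\to\mathcal H_{\beta+\alpha}$ by $c_\alpha \hat J_{-n_1}\cdots\hat J_{-n_k}\Omega_\beta=\hat J_{-n_1}\cdots\hat J_{-n_k}\Omega_{\beta+\alpha}$ ($n_i>0$). Define the formal series $E^{\pm}(\alpha,z)=\exp\bigl(\mp\sum_{n>0}\frac{\alpha\hat J_{\pm n}}{n}z^{\mp n}\bigr)$ and $Y_\alpha(z)=c_\alpha E^-(\alpha,z)E^+(\alpha,z)z^{\alpha\hat J_0}$, where $z^{\alpha\hat J_0}$ acts as $z^{\alpha\beta}$ on $\mathcal H_\beta$. With $d=\alpha^2/2$ write $Y_\alpha(z)=\sum_{s\in\mathbb{R}}Y_{\alpha,s}z^{-s-d}$; the coefficient $Y_{\alpha,s}$ maps $\mathcal H_\beta$ into $\mathcal H_{\beta+\alpha}$ and is nonzero on $\mathcal H_\beta$ only for $s\in\mathbb{Z}-\alpha\beta-d$. For $|\alpha|\le1$ these are bounded operators, and one has $\|Y_{\alpha,-n-d}\Omega_0\|^2=\binom{2d+n-1}{n}=\frac{\Gamma(2d+n)}{\Gamma(n+1)\Gamma(2d)}$ for integers $n\ge0$ (and $Y_{\alpha,-n-d}\Omega_0=0$ for $n<0$). *)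

(* Defs.v *)
(* A concrete model of the charged Fock space
   \hat H^fin = (+)_j H^fin_{j alpha0} and of the vertex-operator coefficients
   Y_{alpha,s}, following the definitions of the paper literally. *)
From HB Require Import structures.
From mathcomp Require Import all_boot all_order all_algebra.
From mathcomp Require Import reals.
Set Implicit Arguments. Unset Strict Implicit. Unset Printing Implicit Defensive.
Import Order.TTheory GRing.Theory Num.Theory.
Local Open Scope ring_scope.

Section Fock.
Variable R : realType.

(* Basis vector (j, p) of \hat H^fin: the monomial
     J_{-1}^{p_0} J_{-2}^{p_1} ... J_{-k}^{p_{k-1}} Omega_{j alpha0},
   where p_i = nth 0 p i is the number of factors J_{-(i+1)}.
   (Trailing zeros in p are irrelevant; equality is tested via [occeq].) *)
Definition bas := (int * seq nat)%type.

Definition vec := seq (R * bas).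

Definition occeq (p q : seq nat) : bool :=
  all (fun k => nth 0%N p k == nth 0%N q k) (iota 0 (maxn (size p) (size q))).

(* <J_{-1}^{p_0}...Omega, same> = prod_k (k+1)^{p_k} p_k! ; distinct monomials
   (or distinct charges) are orthogonal. *)
Definition weight (p : seq nat) : R :=
  \prod_(k < size p) (((k.+1) ^ (nth 0%N p k)) * (nth 0%N p k)`!)%:R.

Definition bip (b b' : bas) : R :=
  if (b.1 == b'.1) && occeq b.2 b'.2 then weight b.2 else 0.

Definition ip (v w : vec) : R :=
  \sum_(x <- v) \sum_(y <- w) x.1 * y.1 * bip x.2 y.2.

Definition vscale (c : R) (v : vec) : vec := [seq (c * x.1, x.2) | x <- v].

Definition lin (f : bas -> vec) (v : vec) : vec :=
  flatten [seq vscale x.1 (f x.2) | x <- v].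

Definition Jcre (n : nat) (b : bas) : vec :=
  [:: (1, (b.1, incr_nth b.2 n.-1))].

(* annihilation operator \hat J_n, n > 0 :  J_n = n d/dJ_{-n} *)
Definition Jann (n : nat) (b : bas) : vec :=
  let m := nth 0%N b.2 n.-1 in
  [:: ((n * m)%:R, (b.1, set_nth 0%N b.2 n.-1 m.-1))].

Fixpoint comps (r k : nat) : seq (seq nat) :=
  match r with
  | 0 => if k == 0%N then [:: [::]] else [::]
  | r'.+1 => flatten [seq [seq i :: c | c <- comps r' (k - i)] | i <- iota 1 k]
  end.

Definition word (f : nat -> bas -> vec) (c : seq nat) (v : vec) : vec :=
  foldr (fun n w => lin (f n) w) v c.

(* Coefficient of z^k (resp. z^{-k}) in
     exp(sum_{n>0} (sg alpha / n) J_{-+n} z^{+-n})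
   = sum_r (1/r!) (sum_n (sg alpha/n) J_{-+n} z^{+-n})^r ,
   expanded literally: the coefficient of z^k of the r-th power is the sum over
   compositions (n_1,...,n_r) of k. *)
Definition expcoef (f : nat -> bas -> vec) (sgalpha : R) (k : nat) (v : vec) : vec :=
  flatten [seq flatten [seq vscale ((r`!%:R)^-1 * \prod_(n <- c) (sgalpha / n%:R))
                                  (word f c v) | c <- comps r k]
          | r <- iota 0 k.+1].

(* E^-(alpha,z) = exp(+ sum alpha J_{-n} z^n / n):  coefficient of z^k *)
Definition Eminus (alpha : R) (k : nat) (v : vec) : vec := expcoef Jcre alpha k v.
(* E^+(alpha,z) = exp(- sum alpha J_n z^{-n} / n):  coefficient of z^{-m} *)
Definition Eplus (alpha : R) (m : nat) (v : vec) : vec := expcoef Jann (- alpha) m v.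

Definition deg (p : seq nat) : nat := \sum_(k < size p) k.+1 * nth 0%N p k.

Definition cshift (a : int) (v : vec) : vec := [seq (x.1, (x.2.1 + a, x.2.2)) | x <- v].

(* Coefficient Y_{alpha,s} of  Y_alpha(z) = c_alpha E^- E^+ z^{alpha J_0}
   = sum_s Y_{alpha,s} z^{-s-d},  d = alpha^2/2,  alpha = a * alpha0,
   on a basis vector of H_beta, beta = j alpha0.  The z-power of the term
   z^k (from E^-) z^{-m} (from E^+) z^{alpha beta} is k - m + alpha beta, which
   must equal -s-d, i.e. m - k = s + d + alpha beta.  Terms with m > deg p
   vanish (E^+ lowers the degree by m), so the sum over m is finite. *)
Definition Ybas (alpha0 : R) (a : int) (s : R) (b : bas) : vec :=
  let alpha := a%:~R * alpha0 in
  let d := alpha ^+ 2 / 2 in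
  let beta := b.1%:~R * alpha0 in
  let t := s + d + alpha * beta in
  if t \is a Num.int then
    let K := Num.floor t in
    flatten [seq if (K <= m%:Z) then
                   cshift a (Eminus alpha `|m%:Z - K|%N (Eplus alpha m [:: (1, b)]))
                 else [::]
            | m <- iota 0 (deg b.2).+1]
  else [::].

Definition Ycoef (alpha0 : R) (a : int) (s : R) (v : vec) : vec := lin (Ybas alpha0 a s) v.

Definition Omega0 : vec := [:: (1, (0%Z, [::]))].

Definition tvec := seq (R * (bas * bas)).

Definition tens (v w : vec) : tvec := [seq (x.1 * y.1, (x.2, y.2)) | x <- v, y <- w].

Definition tip (u u' : tvec) : R :=
  \sum_(x <- u) \sum_(y <- u') x.1 * y.1 * (bip x.2.1 y.2.1 * bip x.2.2 y.2.2).

Definition tscale (c : R) (u : tvec) : tvec := [seq (c * x.1, x.2) | x <- u].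

Definition tlin (A B : vec -> vec) (u : tvec) : tvec :=
  flatten [seq tscale x.1 (tens (A [:: (1, x.2.1)]) (B [:: (1, x.2.2)])) | x <- u].

Definition term (alpha0 : R) (a s n : int) : tvec :=
  let alpha := a%:~R * alpha0 in
  let d := alpha ^+ 2 / 2 in
  tlin (Ycoef alpha0 a (- n%:~R - d)) (Ycoef alpha0 a (- n%:~R - d - s%:~R))
       (tens Omega0 Omega0).

Definition symrange (N : nat) : seq int := [seq i%:Z - N%:Z | i <- iota 0 (N.*2.+1)].

Definition psum (alpha0 : R) (a s : int) (N : nat) : tvec :=
  flatten [seq term alpha0 a s n | n <- symrange N].

(* Cauchy sequence in the pre-Hilbert space \hat H^fin (x) \hat H^fin, i.e.
   convergent in its completion \hat H (x) \hat H *)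
Definition tcauchy (S : nat -> tvec) : Prop :=
  forall eps : R, 0 < eps -> exists N : nat, forall M M' : nat, (N <= M)%N -> (N <= M')%N ->
    let D := S M ++ tscale (-1) (S M') in tip D D < eps.

End Fock.

(* Main.v *)
Require Import Defs.
From HB Require Import structures.
From mathcomp Require Import all_boot all_order all_algebra.
From mathcomp Require Import reals ring lra.
Import Order.TTheory GRing.Theory Num.Theory.
Local Open Scope ring_scope.

Definition Sw (w : nat -> nat) (p : seq nat) : nat :=
  (\sum_(k < size p) w k * nth 0%N p k)%N.

Lemma Sw_ext w p N : (size p <= N)%N -> Sw w p = (\sum_(k < N) w k * nth 0%N p k)%N.
Proof.
move=> hN; rewrite /Sw (big_ord_widen _ (fun k => w k * nth 0%N p k)%N hN) big_mkcond.
apply: eq_bigr => i _; case: ltnP => // h; by rewrite nth_default // muln0.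
Qed.
Arguments Sw_ext w {p N}.

Lemma Sw_ext0 w p N : (forall k, (N <= k)%N -> nth 0%N p k = 0%N) ->
  Sw w p = (\sum_(k < N) w k * nth 0%N p k)%N.
Proof.
move=> H; rewrite (Sw_ext w (leq_maxr N (size p))).
rewrite (big_ord_widen _ (fun k => w k * nth 0%N p k)%N (leq_maxl N (size p))) [RHS]big_mkcond.
apply: eq_bigr => i _; case: ltnP => // h; by rewrite H // muln0.
Qed.

Lemma Sw_eq w p q : (forall k, nth 0%N p k = nth 0%N q k) -> Sw w p = Sw w q.
Proof.
move=> H; rewrite (Sw_ext w (leq_maxl (size p) (size q))) (Sw_ext w (leq_maxr (size p) (size q))).
by apply: eq_bigr => i _; rewrite H.
Qed.

Lemma sum_delta (N j : nat) (w : nat -> nat) : (j < N)%N ->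
  (\sum_(k < N) w k * (j == k))%N = w j.
Proof.
move=> hj; rewrite (bigD1 (Ordinal hj)) //= eqxx muln1 big1 ?addn0 // => i.
by rewrite -val_eqE /= eq_sym => /negbTE ->; rewrite muln0.
Qed.

Lemma Sw_incr w p j : Sw w (incr_nth p j) = (Sw w p + w j)%N.
Proof.
set N := maxn (size p) j.+1.
have h1 : (size (incr_nth p j) <= N)%N.
  rewrite size_incr_nth; case: ifP => _; [exact: leq_maxl | exact: leq_maxr].
rewrite (Sw_ext w h1) (Sw_ext w (leq_maxl (size p) j.+1)).
rewrite -/N -(@sum_delta N j w (leq_maxr (size p) j.+1)) -big_split /=.
by apply: eq_bigr => i _; rewrite nth_incr_nth mulnDr addnC.
Qed.

Lemma Sw_ge w p k : (w k * nth 0%N p k <= Sw w p)%N.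
Proof.
case: (ltnP k (size p)) => hk; last by rewrite nth_default // muln0.
by rewrite /Sw (bigD1 (Ordinal hk)) //= leq_addr.
Qed.

Definition parts (p : seq nat) := Sw (fun _ => 1%N) p.

Lemma degE p : deg p = Sw (fun k => k.+1) p. Proof. by []. Qed.

Lemma occeqP p q : reflect (forall k, nth 0%N p k = nth 0%N q k) (occeq p q).
Proof.
apply: (iffP allP) => [H k | H k _]; last exact/eqP/H.
case: (ltnP k (maxn (size p) (size q))) => hk.
  by apply/eqP/H; rewrite mem_iota add0n.
by rewrite !nth_default // (leq_trans _ hk) // ?leq_maxl ?leq_maxr.
Qed.

Lemma occeq_incr p q j : occeq (incr_nth p j) q =
  (0 < nth 0%N q j)%N && occeq p (set_nth 0%N q j (nth 0%N q j).-1).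
Proof.
apply/occeqP/andP => [H | [hq /occeqP H] k].
  have hj := H j; rewrite nth_incr_nth eqxx in hj.
  split; first by rewrite -hj.
  apply/occeqP => k; rewrite nth_set_nth /=; case: eqP => [->|/eqP nk].
    by rewrite -hj.
  by rewrite -H nth_incr_nth eq_sym (negbTE nk).
rewrite nth_incr_nth H nth_set_nth /=; case: (eqVneq k j) => [->|nk].
  by rewrite ?eqxx add1n prednK.
by rewrite ?eqxx; rewrite ?(eq_sym j k) ?(negbTE nk).
Qed.

Lemma incr_set q j : (0 < nth 0%N q j)%N -> forall k,
  nth 0%N (incr_nth (set_nth 0%N q j (nth 0%N q j).-1) j) k = nth 0%N q k.
Proof.
move=> hq k; rewrite nth_incr_nth nth_set_nth /=; case: (eqVneq k j) => [->|nk].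
  by rewrite ?eqxx add1n prednK.
by rewrite ?eqxx; rewrite ?(eq_sym j k) ?(negbTE nk).
Qed.

Definition monoc (c : seq nat) : seq nat := foldr (fun n p => incr_nth p n.-1) [::] c.

Lemma comps_prop r k c : c \in comps r k ->
  [/\ size c = r, sumn c = k & all (fun i => 0 < i)%N c].
Proof.
elim: r k c => [|r IH] k c /=.
  by case: k => [|k] //=; rewrite inE => /eqP ->.
move=> /flattenP [s /mapP [i hi ->]] /mapP [c' hc' ->].
have [h1 h2 h3] := IH _ _ hc'; rewrite mem_iota in hi.
case/andP: hi => hi1 hi2; rewrite /= h1 h2 h3 andbT; split => //.
rewrite subnKC //; by rewrite add1n ltnS in hi2.
Qed.

Lemma parts_monoc c : parts (monoc c) = size c.
Proof. by elim: c => [|i c IH] /=; [rewrite /parts /Sw big_ord0 | rewrite /parts Sw_incr -/(parts _) IH addn1]. Qed.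

Lemma deg_monoc c : all (fun i => 0 < i)%N c -> deg (monoc c) = sumn c.
Proof.
elim: c => [|i c IH] /=; first by rewrite /deg big_ord0.
case/andP => hi hc; by rewrite degE Sw_incr -degE IH // prednK // addnC.
Qed.
Definition weightN (p : seq nat) (N : nat) (R : realType) : R :=
  \prod_(k < N) (((k.+1) ^ (nth 0%N p k)) * (nth 0%N p k)`!)%:R.

Lemma weight_ext (R : realType) p N : (size p <= N)%N -> weight R p = weightN p N R.
Proof.
move=> hN; rewrite /weight /weightN.
rewrite (big_ord_widen _ (fun k => (((k.+1) ^ (nth 0%N p k)) * (nth 0%N p k)`!)%:R : R) hN) big_mkcond.
apply: eq_bigr => i _; case: ltnP => // h; by rewrite nth_default.
Qed.
Arguments weight_ext R {p N}.

Lemma weight_incr (R : realType) p j :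
  weight R (incr_nth p j) = ((j.+1 * (nth 0%N p j).+1)%:R) * weight R p.
Proof.
set N := maxn (size p) j.+1.
have h1 : (size (incr_nth p j) <= N)%N.
  rewrite size_incr_nth; case: ifP => _; [exact: leq_maxl | exact: leq_maxr].
have hj : (j < N)%N by exact: leq_maxr.
rewrite (weight_ext R h1) (weight_ext R (leq_maxl (size p) j.+1)) -/N /weightN.
rewrite (bigD1 (Ordinal hj)) //= [in RHS](bigD1 (Ordinal hj)) //= mulrA.
congr (_ * _).
  by rewrite nth_incr_nth eqxx add1n -natrM expnS factS mulnACA.
apply: eq_bigr => i; rewrite -val_eqE /= => ni.
by rewrite nth_incr_nth eq_sym (negbTE ni).
Qed.

Definition invprod (R : realType) (c : seq nat) : R := \prod_(i <- c) (i%:R)^-1.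
Definition wocc (R : realType) p q : R := if occeq p q then weight R p else 0.

Lemma step_local (R : realType) i p q : (0 < i)%N ->
  (i%:R)^-1 * wocc R (incr_nth p i.-1) q =
  (nth 0%N q i.-1)%:R * wocc R p (set_nth 0%N q i.-1 (nth 0%N q i.-1).-1).
Proof.
move=> hi; rewrite /wocc occeq_incr.
case hq: (0 < nth 0%N q i.-1)%N => /=; last first.
  move: hq; rewrite lt0n => /negbFE/eqP ->; by rewrite mulr0 mul0r.
case ho: (occeq _ _); last by rewrite !mulr0.
rewrite weight_incr mulrA; congr (_ * _).
have := (occeqP _ _ ho) i.-1; rewrite nth_set_nth /= eqxx => ->.
rewrite prednK // prednK // natrM mulrA mulVf ?mul1r //.
by rewrite pnatr_eq0 -lt0n.
Qed.

Lemma parts0 q : (parts q == 0%N) = occeq [::] q.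
Proof.
apply/eqP/occeqP => [H k | H].
  have := Sw_ge (fun _ => 1%N) q k; rewrite -/(parts q) H mul1n leqn0 => /eqP ->.
  by rewrite nth_nil.
rewrite /parts (@Sw_eq _ q [::]); first by rewrite /Sw big_ord0.
by move=> k; rewrite -H.
Qed.

Lemma parts0_deg q : parts q = 0%N -> deg q = 0%N.
Proof.
move/eqP; rewrite parts0 => /occeqP H.
rewrite degE (@Sw_eq _ q [::]); first by rewrite /Sw big_ord0.
by move=> k; rewrite -H.
Qed.

Lemma big_iota1 (R : realType) m (f : nat -> R) :
  \sum_(i <- iota 1 m) f i = \sum_(k < m) f k.+1.
Proof.
rewrite -(addn0 1%N) iotaDl big_map.
have -> : iota 0 m = index_iota 0 m by rewrite /index_iota subn0.
by rewrite big_mkord.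
Qed.

Lemma big_iota1N m (f : nat -> nat) :
  (\sum_(i <- iota 1 m) f i = \sum_(k < m) f k.+1)%N.
Proof.
rewrite -(addn0 1%N) iotaDl big_map.
have -> : iota 0 m = index_iota 0 m by rewrite /index_iota subn0.
by rewrite big_mkord.
Qed.

Lemma KL (R : realType) r : forall m q,
  \sum_(c <- comps r m) invprod R c * wocc R (monoc c) q =
  if (parts q == r) && (deg q == m) then (r`!)%:R else 0.
Proof.
elim: r => [|r IH] m q.
  case: m => [|m] /=.
    rewrite big_cons big_nil addr0 /invprod big_nil mul1r /wocc /= -parts0.
    case hp: (parts q == 0%N) => //=.
    by rewrite (@parts0_deg _ (eqP hp)) /weight big_ord0.
  rewrite big_nil; case hp: (parts q == 0%N) => //=.
  by rewrite (@parts0_deg _ (eqP hp)).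
rewrite /= big_flatten /= big_map.
pose C : R := if (parts q == r.+1) && (deg q == m) then (r`!)%:R else 0.
have E : forall i, i \in iota 1 m ->
   \sum_(c <- [seq i :: c | c <- comps r (m - i)]) invprod R c * wocc R (monoc c) q
   = (nth 0%N q i.-1)%:R * C.
  move=> i; rewrite mem_iota add1n ltnS => /andP [hi1 hi2].
  rewrite big_map.
  under eq_bigr => c _ do rewrite /invprod big_cons /= -/(invprod R c) mulrAC
      step_local // -mulrA [X in _ * X]mulrC.
  rewrite -big_distrr /= IH.
  case hq: (nth 0%N q i.-1) => [|x]; first by rewrite !mul0r.
  congr (_ * _); rewrite /C.
  have hq' : (0 < nth 0%N q i.-1)%N by rewrite hq.
  have Ep := @Sw_eq (fun _ => 1%N) _ _ (@incr_set _ _ hq').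
  have Ed := @Sw_eq (fun k => k.+1) _ _ (@incr_set _ _ hq').
  rewrite Sw_incr -/(parts _) in Ep; rewrite Sw_incr -degE in Ed.
  rewrite -/(parts q) in Ep; rewrite -degE prednK // in Ed.
  rewrite -hq -Ep -Ed addn1 eqSS.
  have -> : (deg (set_nth 0 q i.-1 (nth 0 q i.-1).-1) + i == m)%N =
            (deg (set_nth 0 q i.-1 (nth 0 q i.-1).-1) == m - i)%N.
    apply/eqP/eqP => [<-|->]; first by rewrite addnK.
    by rewrite subnK.
  by [].
rewrite (eq_big_seq _ E) -big_distrl /= -natr_sum.
rewrite /C; case hc: (_ && _); last by rewrite mulr0.
case/andP: hc => /eqP hp /eqP hd.
rewrite factS natrM; congr (_ * _); congr (_%:R).
rewrite big_iota1N /=.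
rewrite -hp /parts (@Sw_ext0 _ _ m).
  by apply: eq_bigr => k _; rewrite mul1n.
move=> k hk; apply/eqP; rewrite -leqn0 leqNgt; apply/negP => hpos.
have := Sw_ge (fun k => k.+1) q k; rewrite -degE hd.
have : (k.+1 <= k.+1 * nth 0%N q k)%N by rewrite leq_pmulr.
move=> h1 h2; have := leq_trans h1 h2; by rewrite ltnNge hk.
Qed.
Definition g (R : realType) r k : R := \sum_(c <- comps r k) invprod R c.
Definition F {R : realType} (c : R) k : R :=
  \sum_(r < k.+1) (c ^+ r / (r`!)%:R) * g R r k.

Lemma size_le_sumn c : all (fun i => 0 < i)%N c -> (size c <= sumn c)%N.
Proof.
elim: c => [|i c IH] //= /andP [hi hc].
by rewrite -add1n leq_add // IH.
Qed.

Arguments comps_prop {r k c}.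
Arguments size_le_sumn {c}.

Lemma g_big (R : realType) r m : (m < r)%N -> g R r m = 0.
Proof.
move=> hm; rewrite /g big_seq big1 // => c hc.
have [h1 h2 h3] := comps_prop hc.
have := size_le_sumn h3; rewrite h1 h2 => h; by move: (leq_ltn_trans h hm); rewrite ltnn.
Qed.

Definition Lpoly (R : realType) K : {poly R} :=
  \poly_(j < K) (if j == 0%N then 0 else (j%:R)^-1).

Lemma G1 (R : realType) K r : forall k, (k < K)%N -> (Lpoly R K ^+ r)`_k = g R r k.
Proof.
elim: r => [|r IH] k hk.
  rewrite expr0 coef1 /g; case: k hk => [|k] hk /=.
    by rewrite big_cons big_nil addr0 /invprod big_nil.
  by rewrite big_nil.
rewrite exprS coefM big_ord_recl /= /Lpoly coef_poly (leq_ltn_trans (leq0n _) hk) /= mul0r add0r.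
rewrite /g /= big_flatten /= big_map.
under [RHS]eq_bigr => i _ do rewrite big_map.
rewrite big_iota1 /=.
apply: eq_bigr => j _.
rewrite -/(Lpoly R K) coef_poly /bump /= add1n.
have hj : (j.+1 < K)%N by apply: leq_ltn_trans hk; exact: ltn_ord.
rewrite hj /= IH; last by apply: leq_ltn_trans hk; rewrite leq_subr.
rewrite /g big_distrr /=; apply: eq_bigr => c _.
by rewrite /invprod big_cons.
Qed.

Lemma G2 (R : realType) r k : (k.+1)%:R * g R r k.+1 = r%:R * \sum_(j < k.+1) g R r.-1 (k - j).
Proof.
have hK : (k.+1 < k.+2)%N by [].
rewrite -(@G1 R _ r _ hK) mulr_natl -coef_deriv deriv_exp coefMn coefM [RHS]mulr_natl.
congr (_ *+ _); apply: eq_bigr => j _.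
rewrite coef_deriv /Lpoly coef_poly.
have hj : (j.+1 < k.+2)%N by rewrite !ltnS -ltnS ltn_ord.
rewrite hj /= -/(Lpoly R k.+2) -[_ *+ j.+1]mulr_natr mulVf ?pnatr_eq0 // mul1r (@G1 R) //.
by rewrite ltnS (leq_trans (leq_subr _ _)).
Qed.

Lemma F_ext (R : realType) (c : R) N m : (m < N)%N ->
  \sum_(r < N) (c ^+ r / (r`!)%:R) * g R r m = F c m.
Proof.
move=> hN; rewrite /F (big_ord_widen _ (fun r => (c ^+ r / (r`!)%:R) * g R r m) hN).
rewrite [RHS]big_mkcond; apply: eq_bigr => r _; case: ltnP => // h.
by rewrite g_big ?mulr0.
Qed.

Lemma F0 (R : realType) (c : R) : F c 0 = 1.
Proof.
by rewrite /F big_ord1 /g /= big_cons big_nil addr0 /invprod big_nil expr0 mul1r mulr1 invr1.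
Qed.

Lemma Frec (R : realType) (c : R) k :
  (k.+1)%:R * F c k.+1 = c * \sum_(j < k.+1) F c (k - j).
Proof.
rewrite /F big_distrr /=.
under eq_bigr => r _ do rewrite mulrCA G2.
rewrite big_ord_recl /= mul0r mulr0 add0r.
under eq_bigr => r _ do rewrite /bump /= add1n add0n.
have E : forall r : 'I_k.+1, c ^+ r.+1 / (r.+1`!)%:R * (r.+1%:R * \sum_(j < k.+1) g R r (k - j))
    = c * (c ^+ r / (r`!)%:R * \sum_(j < k.+1) g R r (k - j)).
  move=> r; rewrite factS natrM exprS.
  have h1 : (r.+1%:R : R) != 0 by rewrite pnatr_eq0.
  have h2 : ((r`!)%:R : R) != 0 by rewrite pnatr_eq0 -lt0n fact_gt0.
  by field; rewrite h2 nat1r h1.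
under eq_bigr => r _ do rewrite E.
rewrite -big_distrr /=; congr (_ * _).
under eq_bigr => r _ do rewrite big_distrr /=.
rewrite exchange_big /=; apply: eq_bigr => j _.
by rewrite F_ext // ltnS leq_subr.
Qed.

Lemma FF (R : realType) (c : R) k : (k.+1)%:R * F c k.+1 = (k%:R + c) * F c k.
Proof.
case: k => [|k].
  by rewrite Frec big_ord1 subn0 add0r.
rewrite Frec big_ord_recl /= subn0 mulrDr.
under eq_bigr => j _ do rewrite /bump /= add1n subSS.
rewrite -Frec mulrDl addrC; congr (_ + _); by rewrite mulrC.
Qed.
Lemma FS (R : realType) (c : R) k : F c k.+1 = (k%:R + c) / (k.+1)%:R * F c k.
Proof.
have h : ((k.+1)%:R : R) != 0 by rewrite pnatr_eq0.
by rewrite mulrAC -FF mulrAC mulfV // mul1r.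
Qed.

Lemma Fpos {R : realType} (c : R) : 0 < c -> forall k, 0 < F c k.
Proof.
move=> hc; elim => [|k IH]; first by rewrite F0.
rewrite FS; apply: mulr_gt0 => //; apply: divr_gt0; last by rewrite ltr0n.
by apply: ltr_wpDl => //; rewrite ler0n.
Qed.

Lemma Fdec {R : realType} (c : R) : 0 < c -> c <= 1 -> forall k, F c k.+1 <= F c k.
Proof.
move=> hc hc1 k; rewrite FS; apply: ler_piMl; first by have := Fpos c hc k; apply: ltW.
by rewrite ler_pdivrMr ?ltr0n // mul1r -nat1r; lra.
Qed.

Lemma Fanti {R : realType} (c : R) : 0 < c -> c <= 1 -> forall i j, (i <= j)%N -> F c j <= F c i.
Proof.
move=> hc hc1 i j /subnK <-; elim: (j - i)%N => [|n IH]; first by rewrite add0n.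
by rewrite addSn (le_trans _ IH) // Fdec.
Qed.

Lemma Flow {R : realType} (c : R) : 1 / 2 <= c -> c <= 1 ->
  forall k, (0 < k)%N -> 1 <= 4 * k%:R * F c k ^+ 2.
Proof.
move=> hc hc1; have c0 : 0 < c by apply: lt_le_trans hc; rewrite divr_gt0 ?ltr01 ?ltr0n.
elim => [//|k IH] _.
case: k IH => [|k] IH.
  rewrite FS F0 add0r mulr1 divr1; nra.
have IH' := IH isT.
have hF := Fpos c c0 k.+1.
have E := FF R c k.+1.
have hK : (1 : R) <= k.+1%:R by rewrite ler1n.
rewrite -[(k.+2)%:R]natr1 in E *.
move: E IH' hF hK; set x := F c k.+1; set y := F c k.+2; set K : R := k.+1%:R.
move=> E IH' hF hK.
set z := (K + 1) * y.
have h1 : (K + 1 / 2) * x <= z by rewrite /z E; apply: ler_wpM2r; [exact: ltW | lra].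
have h2 : ((K + 1 / 2) * x) ^+ 2 <= z ^+ 2.
  apply: lerXn2r => //; rewrite ?nnegrE; [apply: mulr_ge0; [lra | exact: ltW] | apply: le_trans h1; apply: mulr_ge0; [lra|exact: ltW]].
have h3 : K * (K + 1) <= 4 * K * z ^+ 2.
  have : (K + 1/2) ^+ 2 * 1 <= (K + 1/2) ^+2 * (4 * K * x ^+ 2) by apply: ler_wpM2l => //; exact: sqr_ge0.
  rewrite exprMn in h2; nra.
have h4 : K + 1 <= 4 * z ^+ 2 by nra.
rewrite /z exprMn in h4; nra.
Qed.
Definition coefk {R : realType} (al : R) r c : R := ((r`!)%:R)^-1 * \prod_(n <- c) (al / n%:R).

Definition NF {R : realType} (al u : R) (j : int) k : vec R :=
  flatten [seq flatten [seq [:: (coefk al r c * u, (j, monoc c))] | c <- comps r k]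
          | r <- iota 0 k.+1].

Lemma big_NF {R : realType} (al u : R) j k (f : R * bas -> R) :
  \sum_(x <- NF al u j k) f x =
  \sum_(r <- iota 0 k.+1) \sum_(c <- comps r k) f (coefk al r c * u, (j, monoc c)).
Proof.
rewrite /NF big_flatten big_map; apply: eq_bigr => r _.
rewrite big_flatten big_map; apply: eq_bigr => c _.
by rewrite big_seq1.
Qed.

Lemma prod_al {R : realType} (al : R) c :
  \prod_(n <- c) (al / n%:R) = al ^+ size c * invprod R c.
Proof.
elim: c => [|n c IH]; first by rewrite /invprod !big_nil mul1r.
by rewrite /invprod !big_cons -/(invprod R c) IH /= exprS; ring.
Qed.

Lemma coefkE {R : realType} (al : R) r c : c \in comps r (sumn c) ->
  coefk al r c = al ^+ r / (r`!)%:R * invprod R c.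
Proof.
move=> /comps_prop [h1 _ _]; rewrite /coefk prod_al h1; ring.
Qed.

Lemma sum_pick {R : realType} (s : seq nat) r' (f : nat -> R) : uniq s -> r' \in s ->
  \sum_(i <- s) (if r' == i then f i else 0) = f r'.
Proof.
move=> us hr; rewrite -big_mkcond (eq_bigl (pred1 r')) => [|j]; last exact: eq_sym.
by rewrite -big_filter filter_pred1_uniq // big_seq1.
Qed.

Lemma inner {R : realType} (al u : R) j k r' m c' : c' \in comps r' m ->
  \sum_(x <- NF al u j k) x.1 * bip R x.2 (j, monoc c') =
  if k == m then u * al ^+ r' else 0.
Proof.
move=> hc'; have [s1 s2 s3] := comps_prop hc'.
have hp : parts (monoc c') = r' by rewrite parts_monoc.
have hd : deg (monoc c') = m by rewrite deg_monoc.
rewrite big_NF.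
have E : forall r, r \in iota 0 k.+1 ->
   \sum_(c <- comps r k) (coefk al (R:=R) r c * u, (j, monoc c)).1 * bip R (coefk al r c * u, (j, monoc c)).2 (j, monoc c')
   = u * (al ^+ r / (r`!)%:R) * (if (r' == r) && (m == k) then (r`!)%:R else 0).
  move=> r _; rewrite -hp -hd -(KL R r k (monoc c')) big_distrr /=.
  rewrite big_seq [RHS]big_seq; apply: eq_bigr => c hc.
  have hc2 := hc; have [_ e2 _] := comps_prop hc2.
  rewrite coefkE ?e2 // /bip /wocc /= eqxx /=; ring.
rewrite (eq_big_seq _ E).
case: (eqVneq k m) => [ekm|nkm].
  rewrite -ekm in s2 *.
  have hr : r' \in iota 0 k.+1 by rewrite mem_iota add0n ltnS -s1 -s2 size_le_sumn.
  have E2 : forall r, u * (al ^+ r / (r`!)%:R) * (if (r' == r) && true then (r`!)%:R else 0)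
     = if r' == r then u * al ^+ r else 0.
    move=> r; rewrite andbT; case: ifP => _; last by rewrite mulr0.
    have h : ((r`!)%:R : R) != 0 by rewrite pnatr_eq0 -lt0n fact_gt0.
    by rewrite -mulrA divfK.
  by rewrite (eq_bigr _ (fun r _ => E2 r)) sum_pick // iota_uniq.
rewrite big1 // => i _; by rewrite andbF mulr0.
Qed.
Lemma ipNF {R : realType} (al u u' : R) j k m :
  ip (NF al u j k) (NF al u' j m) = if k == m then u * u' * F (al ^+ 2) k else 0.
Proof.
rewrite /ip exchange_big /=.
have E1 : forall y : R * bas, \sum_(x <- NF al u j k) x.1 * y.1 * bip R x.2 y.2 =
   (\sum_(x <- NF al u j k) x.1 * bip R x.2 y.2) * y.1.
  move=> y; rewrite big_distrl /=; apply: eq_bigr => x _; by rewrite mulrAC.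
rewrite (eq_bigr _ (fun y _ => E1 y)) big_NF.
have E2 : forall r', r' \in iota 0 m.+1 ->
  \sum_(c <- comps r' m) (\sum_(x <- NF al u j k) x.1 * bip R x.2 (coefk al r' c * u', (j, monoc c)).2) *
      (coefk al r' c * u', (j, monoc c)).1
  = if k == m then \sum_(c <- comps r' m) (u * al ^+ r') * (coefk al r' c * u') else 0.
  move=> r' _; rewrite big_seq.
  under eq_bigr => c hc do rewrite /= (@inner R al u j k _ _ _ hc).
  case: ifP => _; first by rewrite -big_seq.
  by rewrite big1 // => c _; rewrite mul0r.
rewrite (eq_big_seq _ E2); case: (eqVneq k m) => [ekm|nkm]; last by rewrite big1.
rewrite -ekm /F big_distrr.
have -> : iota 0 k.+1 = index_iota 0 k.+1 by rewrite /index_iota subn0.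
rewrite big_mkord; apply: eq_bigr => r _.
rewrite /g !big_distrr big_seq [RHS]big_seq /=; apply: eq_bigr => c hc.
have hc2 := hc; have [_ e2 _] := comps_prop hc2.
rewrite coefkE ?e2 // exprAC expr2; ring.
Qed.
Lemma vscale1 {R : realType} (v : vec R) : vscale 1 v = v.
Proof. rewrite /vscale -[RHS]map_id; apply: eq_map => -[x b] /=; by rewrite mul1r. Qed.

Lemma cshiftNF {R : realType} (al u : R) j a k : cshift a (NF al u j k) = NF al u (j + a) k.
Proof.
rewrite /cshift /NF map_flatten -map_comp; congr flatten; apply: eq_map => r /=.
rewrite map_flatten -map_comp; congr flatten; by apply: eq_map => c.
Qed.

Lemma wordJcre {R : realType} c (u : R) b : word (Jcre R) c [:: (u, b)] =
  [:: (u, (b.1, foldr (fun n p => incr_nth p n.-1) b.2 c))].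
Proof. case: b => j p; elim: c => [|n c IH]; first by []. by rewrite /= IH /lin /= mulr1. Qed.

Lemma EminusNF {R : realType} (al u : R) j k : Eminus al k [:: (u, (j, [::]))] = NF al u j k.
Proof.
rewrite /Eminus /expcoef /NF; congr flatten; apply: eq_map => r /=.
congr flatten; apply: eq_map => c /=; by rewrite wordJcre.
Qed.

Lemma Eplus0 {R : realType} (al : R) b : Eplus al 0 [:: (1, b)] = [:: (1, b)].
Proof. by rewrite /Eplus /expcoef /= big_nil invr1 !mulr1. Qed.

Lemma YcoefO {R : realType} (al0 : R) (a : int) (s' : R) (K : int) :
  s' + (a%:~R * al0) ^+ 2 / 2 + (a%:~R * al0) * ((0:int)%:~R * al0) = K%:~R ->
  Ycoef al0 a s' (Omega0 R) =
    if (K <= 0) then NF (a%:~R * al0) 1 (0 + a) `|0%:Z - K|%N else [::].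
Proof.
move=> H; rewrite /Ycoef /lin /Omega0 /= /Ybas /= H intr_int intrKfloor.
rewrite /deg big_ord0 /= cats0 vscale1.
case: ifP => _ //; by rewrite cats0 Eplus0 EminusNF cshiftNF.
Qed.
Lemma tip_tens {R : realType} (A B A' B' : vec R) :
  tip (tens A B) (tens A' B') = ip A A' * ip B B'.
Proof.
rewrite /tip /ip /tens big_allpairs_dep big_distrl; apply: eq_bigr => x _ /=.
rewrite big_distrl /=.
under eq_bigr => y _ do rewrite big_allpairs_dep.
under [RHS]eq_bigr => x' _ do rewrite big_distrr.
rewrite [RHS]exchange_big /=; apply: eq_bigr => y _ /=; apply: eq_bigr => x' _ /=.
rewrite big_distrr /=; apply: eq_bigr => y' _ /=; ring.
Qed.

Lemma tip_scale_l {R : realType} (c : R) u w : tip (tscale c u) w = c * tip u w.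
Proof.
rewrite /tip /tscale big_map big_distrr; apply: eq_bigr => x _ /=.
rewrite big_distrr; apply: eq_bigr => y _ /=; ring.
Qed.

Lemma tip_scale_r {R : realType} (c : R) u w : tip u (tscale c w) = c * tip u w.
Proof.
rewrite /tip big_distrr; apply: eq_bigr => x _ /=.
rewrite /tscale big_map big_distrr; apply: eq_bigr => y _ /=; ring.
Qed.

Lemma tip_cat_l {R : realType} (u v w : tvec R) : tip (u ++ v) w = tip u w + tip v w.
Proof. by rewrite /tip big_cat. Qed.

Lemma tip_cat_r {R : realType} (u v w : tvec R) : tip w (u ++ v) = tip w u + tip w v.
Proof. by rewrite /tip -big_split; apply: eq_bigr => x _; rewrite big_cat. Qed.

Lemma tip_flatten_l {R : realType} (ss : seq (tvec R)) w :
  tip (flatten ss) w = \sum_(s <- ss) tip s w.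
Proof. by rewrite /tip big_flatten. Qed.

Lemma tip_flatten_r {R : realType} (ss : seq (tvec R)) w :
  tip w (flatten ss) = \sum_(s <- ss) tip w s.
Proof.
rewrite /tip; under eq_bigr => x _ do rewrite big_flatten.
by rewrite exchange_big.
Qed.

Definition Av {R : realType} (al0 : R) (a n : int) : vec R :=
  Ycoef al0 a (- n%:~R - (a%:~R * al0) ^+ 2 / 2) (Omega0 R).
Definition Bv {R : realType} (al0 : R) (a s n : int) : vec R :=
  Ycoef al0 a (- n%:~R - (a%:~R * al0) ^+ 2 / 2 - s%:~R) (Omega0 R).

Lemma term_tip {R : realType} (al0 : R) a s n m :
  tip (term al0 a s n) (term al0 a s m) = ip (Av al0 a n) (Av al0 a m) * ip (Bv al0 a s n) (Bv al0 a s m).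
Proof.
rewrite /term /tlin /= !cats0 tip_scale_l tip_scale_r tip_tens !mulr1 !mul1r.
by [].
Qed.

Lemma Av_E {R : realType} (al0 : R) a n :
  Av al0 a n = if 0 <= n then NF (a%:~R * al0) 1 a `|n|%N else [::].
Proof.
rewrite /Av (@YcoefO R al0 a _ (- n)); last first.
  rewrite mulr0z mul0r mulr0 addr0 rmorphN /=; ring.
by rewrite oppr_le0 sub0r opprK add0r.
Qed.

Lemma Bv_E {R : realType} (al0 : R) a s n :
  Bv al0 a s n = if 0 <= n + s then NF (a%:~R * al0) 1 a (absz (n + s)) else [::].
Proof.
rewrite /Bv (@YcoefO R al0 a _ (- (n + s))); last first.
  rewrite mulr0z mul0r mulr0 addr0 rmorphN rmorphD /=; ring.
by rewrite oppr_le0 sub0r opprK add0r.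
Qed.

Lemma ip_nil_l {R : realType} (v : vec R) : ip [::] v = 0.
Proof. by rewrite /ip big_nil. Qed.
Lemma ip_nil_r {R : realType} (v : vec R) : ip v [::] = 0.
Proof. by rewrite /ip big1 // => x _; rewrite big_nil. Qed.
Lemma inv_le {R : realType} (x y : R) : 0 < x -> x <= y -> 1 / y <= 1 / x.
Proof.
move=> hx hxy; have hy : 0 < y by apply: lt_le_trans hxy.
by rewrite ler_pdivrMr // mul1r mulrC ler_pdivlMr // mul1r.
Qed.

Definition hsum {R : realType} M : R := \sum_(k < M) 1 / (k.+1)%:R.

Lemma hsum2 {R : realType} j : j%:R / 2 <= hsum (R:=R) (2 ^ j).
Proof.
elim: j => [|j IH]; first by rewrite mul0r /hsum sumr_ge0 // => i _; rewrite divr_ge0 ?ler0n.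
rewrite expnS mul2n -addnn /hsum big_split_ord /= -/(hsum _).
have H : 1 / 2 <= \sum_(i < 2 ^ j) 1 / ((rshift (2 ^ j) i).+1%:R : R).
  have hp : (0 : R) < (2 ^ j)%:R by rewrite ltr0n expn_gt0.
  apply: (@le_trans _ _ (\sum_(i < 2 ^ j) 1 / (2 ^ j.+1)%:R)).
    rewrite sumr_const card_ord -mulr_natl expnS natrM.
    have h2 : (2 : R) != 0 by rewrite pnatr_eq0.
    rewrite -[_ *+ 2 ^ j]mulr_natl.
    rewrite [X in _ <= X](_ : _ = 1 / (2 * 1)) //.
    by field; rewrite gt_eqF.
  apply: ler_sum => i _; apply: inv_le; first by rewrite ltr0n.
  rewrite ler_nat /= expnS mul2n -addnn -addnS leq_add2l; exact: ltn_ord.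
rewrite -natr1 mulrDl; apply: lerD => //.
Qed.
From mathcomp Require Import zify.

Lemma ipIf {R : realType} (al : R) a (b : bool) k :
  ip (if b then NF al 1 a k else [::]) (if b then NF al 1 a k else [::]) =
  if b then F (al ^+ 2) k else 0.
Proof. by case: b; [rewrite ipNF eqxx !mul1r | rewrite ip_nil_l]. Qed.

Lemma nrmE {R : realType} (al0 : R) a s n :
  tip (term al0 a s n) (term al0 a s n) =
  (if 0 <= n then F ((a%:~R * al0) ^+ 2) (absz n) else 0) *
  (if 0 <= n + s then F ((a%:~R * al0) ^+ 2) (absz (n + s)) else 0).
Proof. by rewrite term_tip Av_E Bv_E !ipIf. Qed.

Lemma orth {R : realType} (al0 : R) a s n m : n != m ->
  tip (term al0 a s n) (term al0 a s m) = 0.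
Proof.
move=> nm; rewrite term_tip !Av_E.
case: (boolP (0 <= n)) => hn; last by rewrite ip_nil_l mul0r.
case: (boolP (0 <= m)) => hm; last by rewrite ip_nil_r mul0r.
rewrite ipNF; case: eqP => [h|_]; last by rewrite mul0r.
by move: nm; rewrite -(gez0_abs hn) -(gez0_abs hm) h eqxx.
Qed.

Lemma F_ge0 {R : realType} (c : R) k : 0 < c -> 0 <= F c k.
Proof. by move=> hc; apply: ltW; apply: Fpos. Qed.

Lemma Flow' {R : realType} (c : R) : 1 / 2 <= c -> c <= 1 ->
  forall n, 1 <= 4 * (n.+1)%:R * F c n ^+ 2.
Proof.
move=> h1 h2 [|n]; first by rewrite F0 expr1n mulr1; lra.
have := Flow c h1 h2 n.+1 (ltn0Sn n).
have hF := F c n.+1 ^+ 2; have h0 : 0 <= F c n.+1 ^+ 2 by apply: sqr_ge0.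
rewrite -[(n.+2)%:R]natr1; nra.
Qed.

Lemma nrm_ge0 {R : realType} (al0 : R) a s n : 0 < (a%:~R * al0) ^+ 2 ->
  0 <= tip (term al0 a s n) (term al0 a s n).
Proof.
move=> hc; rewrite nrmE; apply: mulr_ge0; case: ifP => _ //; exact: F_ge0.
Qed.

Lemma nrm_low {R : realType} (al0 : R) a s (k : nat) :
  1 / 2 <= (a%:~R * al0) ^+ 2 -> (a%:~R * al0) ^+ 2 <= 1 ->
  (absz s <= k)%N -> 1 / (8 * (k.+1)%:R) <= tip (term al0 a s k) (term al0 a s k).
Proof.
set c := (a%:~R * al0) ^+ 2 => h1 h2 hk.
have c0 : 0 < c by lra.
have hks : 0 <= k%:Z + s by lia.
rewrite nrmE -/c /= hks.
set m := absz (k%:Z + s).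
have hm : (m <= k + absz s)%N by rewrite /m; lia.
have e1 := Fanti c c0 h2 _ _ (leq_addr (absz s) k).
have e2 := Fanti c c0 h2 _ _ hm.
have e0 := F_ge0 c (k + absz s) c0.
have hL := Flow' c h1 h2 (k + absz s).
have hK : ((k + absz s).+1%:R : R) <= 2 * (k.+1)%:R.
  rewrite -natrM ler_nat; lia.
have hp : (0 : R) < 8 * (k.+1)%:R by rewrite mulr_gt0 ?ltr0n.
rewrite ler_pdivrMr //.
move: e1 e2 e0 hL hK; set x := F c (k + absz s); set y := F c k; set z := F c m.
move=> e1 e2 e0 hL hK.
have hyz : x ^+ 2 <= y * z by rewrite expr2; apply: ler_pM.
nra.
Qed.
Definition Q {R : realType} (al0 : R) a s N : R :=
  \sum_(n <- symrange N) tip (term al0 a s n) (term al0 a s n).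

Lemma Q_low {R : realType} (al0 : R) a s N : 0 < (a%:~R * al0) ^+ 2 ->
  \sum_(k < N.+1) tip (term al0 a s k) (term al0 a s k) <= Q al0 a s N.
Proof.
move=> hc; rewrite /Q /symrange big_map.
have -> : N.*2.+1 = (N + N.+1)%N by rewrite -addnn addnS.
rewrite iotaD add0n big_cat.
have -> : iota N N.+1 = map (addn N) (iota 0 N.+1) by rewrite -iotaDl addn0.
rewrite big_map.
have -> : iota 0 N.+1 = index_iota 0 N.+1 by rewrite /index_iota subn0.
rewrite big_mkord; apply: ler_wpDl; first by apply: sumr_ge0 => i _; exact: nrm_ge0.
rewrite le_eqVlt; apply/orP; left; apply/eqP.
apply: eq_bigr => i _; by rewrite PoszD [X in X - _]addrC addrK.
Qed.

Definition Tsum {R : realType} S M : R := \sum_(k < M) (if (S <= k)%N then 1 / (k.+1)%:R else 0).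

Lemma T_low {R : realType} S M : hsum (R:=R) M - (minn M S)%:R <= Tsum S M.
Proof.
elim: M => [|M IH]; first by rewrite /hsum /Tsum !big_ord0 min0n subrr.
rewrite /hsum /Tsum !big_ord_recr /= -/(hsum M) -/(Tsum S M).
have h1 : (0 : R) <= 1 / (M.+1)%:R by rewrite divr_ge0 ?ler0n.
have h2 : 1 / (M.+1)%:R <= (1 : R) by rewrite ler_pdivrMr ?ltr0n // mul1r ler1n.
case: leqP => hS.
  have -> : minn M.+1 S = minn M S by rewrite !(minn_idPr _) // (leq_trans hS).
  by rewrite addrAC lerD2r.
have -> : minn M.+1 S = M.+1 by apply/minn_idPl.
have e : minn M S = M by apply/minn_idPl; exact: ltnW.
rewrite e in IH; rewrite addr0; apply: le_trans IH; move: h2; rewrite -natr1 => h2; lra.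
Qed.

Lemma Qunb {R : realType} (al0 : R) a s :
  1 / 2 <= (a%:~R * al0) ^+ 2 -> (a%:~R * al0) ^+ 2 <= 1 ->
  forall (B : R) N0, exists N, (N0 <= N)%N /\ B < Q al0 a s N.
Proof.
move=> h1 h2 B N0; set c := (a%:~R * al0) ^+ 2.
have c0 : 0 < c by rewrite /c; lra.
set S := absz s.
set X : R := 2 * (8 * B + S%:R).
set j := maxn (Num.Def.archi_bound `|X|) N0.
have hj : X < j%:R.
  apply: le_lt_trans (ler_norm X) _; apply: lt_le_trans (archi_boundP (normr_ge0 X)) _.
  by rewrite ler_nat leq_maxl.
have hpos : (0 < 2 ^ j)%N by rewrite expn_gt0.
exists (2 ^ j).-1; split.
  have h : (j < 2 ^ j)%N by apply: ltn_expl.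
  rewrite -ltnS prednK //; exact: leq_ltn_trans (leq_maxr _ _) h.
apply: lt_le_trans (Q_low _ _ _ _ c0); rewrite prednK //.
apply: (@lt_le_trans _ _ (1 / 8 * Tsum S (2 ^ j))); last first.
  rewrite /Tsum big_distrr /=; apply: ler_sum => k _.
  case: ifP => hk; last by rewrite mulr0; exact: nrm_ge0.
  have := nrm_low al0 a s k h1 h2 hk; rewrite mulf_div !mul1r; exact.
have := T_low (R:=R) S (2 ^ j); have := hsum2 (R:=R) j.
have : ((minn (2 ^ j) S)%:R : R) <= S%:R by rewrite ler_nat geq_minr.
move: hj; rewrite /X => *; lra.
Qed.

Lemma mem_sr N (n : int) : (n \in symrange N) = (- N%:Z <= n) && (n <= N%:Z).
Proof.
apply/mapP/andP => [[i]|[h1 h2]].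
  rewrite mem_iota => /andP [_ hi] ->; split; lia.
exists (absz (n + N%:Z)); last by rewrite gez0_abs; [rewrite addrK | lia].
rewrite mem_iota /=; lia.
Qed.

Lemma sr_uniq N : uniq (symrange N).
Proof.
rewrite map_inj_uniq ?iota_uniq // => x y /(congr1 (fun z => z + N%:Z)).
by rewrite !subrK => -[].
Qed.

Lemma sum_pick_in {R : realType} {T : eqType} (s : seq T) x (f : T -> R) : uniq s ->
  \sum_(i <- s) (if x == i then f i else 0) = if x \in s then f x else 0.
Proof.
move=> us; case: ifP => hx.
  rewrite -big_mkcond (eq_bigl (pred1 x)) => [|j]; last exact: eq_sym.
  by rewrite -big_filter filter_pred1_uniq // big_seq1.
rewrite big_seq big1 // => i hi; case: eqP => // e.
by move: hx; rewrite e hi.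
Qed.

Lemma tip_psum {R : realType} (al0 : R) a s X Y :
  tip (psum al0 a s X) (psum al0 a s Y) =
  \sum_(n <- symrange X) (if n \in symrange Y then tip (term al0 a s n) (term al0 a s n) else 0).
Proof.
rewrite /psum tip_flatten_l big_map; apply: eq_bigr => n _.
rewrite tip_flatten_r big_map.
have E : forall m, tip (term al0 a s n) (term al0 a s m) =
   if n == m then tip (term al0 a s n) (term al0 a s n) else 0.
  by move=> m; case: eqVneq => [->|nm] //; exact: orth.
under eq_bigr => m _ do rewrite E.
by rewrite sum_pick_in // sr_uniq.
Qed.

Lemma sum_filter {R : realType} (f : int -> R) X Y B :
  (forall n, (n \in symrange Y) && (n \in symrange X) = (n \in symrange B)) ->
  \sum_(n <- symrange X) (if n \in symrange Y then f n else 0) = \sum_(n <- symrange B) f n.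
Proof.
move=> H; rewrite -big_mkcond -big_filter; apply: perm_big; apply: uniq_perm.
- exact: filter_uniq (sr_uniq X).
- exact: sr_uniq.
- by move=> n; rewrite mem_filter H.
Qed.
Lemma tipD {R : realType} (u v : tvec R) :
  tip (u ++ tscale (-1) v) (u ++ tscale (-1) v) = tip u u - tip u v - tip v u + tip v v.
Proof. rewrite tip_cat_l !tip_cat_r !tip_scale_l !tip_scale_r; ring. Qed.

Theorem mainTheorem2 (R : realType) (alpha0 : R) (a s : int) :
  0 < `|alpha0| <= 1 ->
  1 / Num.sqrt 2 <= `|a%:~R * alpha0| <= 1 ->
  (forall n m : int, n != m -> tip (term alpha0 a s n) (term alpha0 a s m) = 0) /\
  ~ (exists B : R, forall N : nat,
        \sum_(n <- symrange N) tip (term alpha0 a s n) (term alpha0 a s n) <= B) /\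
  ~ tcauchy (psum alpha0 a s).
Proof.
move=> _ /andP [hl hu].
set al := a%:~R * alpha0.
have hs2 : Num.sqrt (2 : R) ^+ 2 = 2 by rewrite sqr_sqrtr // ler0n.
have hs0 : 0 < Num.sqrt (2 : R) by rewrite sqrtr_gt0 ltr0n.
have hn0 : 0 <= `|al| by exact: normr_ge0.
have h1 : 1 / 2 <= al ^+ 2.
  rewrite -(real_normK (num_real al)).
  move: hl; rewrite ler_pdivrMr // => hl.
  have : 1 <= (`|al| * Num.sqrt 2) ^+ 2.
    exact: exprn_ege1.
  rewrite exprMn hs2 => h; lra.
have h2 : al ^+ 2 <= 1.
  by rewrite -(real_normK (num_real al)); apply: exprn_ile1.
split; first by move=> n m; exact: orth.
split.
  case=> B HB.
  have [N [_ hN]] := Qunb alpha0 a s h1 h2 B 0.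
  have := HB N; rewrite -/(Q alpha0 a s N); lra.
move=> Hc; have [N0 HN0] := Hc 1 ltr01.
have [A [hA hQ]] := Qunb alpha0 a s h1 h2 (Q alpha0 a s N0 + 1) N0.
have : tip (psum alpha0 a s A ++ tscale (-1) (psum alpha0 a s N0))
           (psum alpha0 a s A ++ tscale (-1) (psum alpha0 a s N0)) < 1
  := HN0 A N0 hA (leqnn N0).
rewrite tipD !tip_psum.
have m1 : forall n, (n \in symrange A) && (n \in symrange A) = (n \in symrange A).
  by move=> n; rewrite andbb.
have m2 : forall n, (n \in symrange N0) && (n \in symrange A) = (n \in symrange N0).
  move=> n; rewrite !mem_sr; apply/idP/idP; first by case/andP.
  move=> /andP [x y]; rewrite x y /=; apply/andP; split; lia.
have m3 : forall n, (n \in symrange A) && (n \in symrange N0) = (n \in symrange N0).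
  by move=> n; rewrite andbC m2.
have m4 : forall n, (n \in symrange N0) && (n \in symrange N0) = (n \in symrange N0).
  by move=> n; rewrite andbb.
rewrite (sum_filter _ _ _ _ m1) (sum_filter _ _ _ _ m2) (sum_filter _ _ _ _ m3) (sum_filter _ _ _ _ m4).
rewrite -!/(Q alpha0 a s _).
lra.
Qed.
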